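(* Let $(\mathcal{X},d)$ be a finite metric space, $\mu\in\mathcal{M}_+(\mathcal{X})$, $t>0$, $s\in(0,1]$, and let $\hat\mu_{t,s}$ be the Poisson-model estimator. Then for every $p\ge1$ and $C>0$, $$\mathbb{E}\big[\mathrm{KR}^p_{p,C}(\hat\mu_{t,s},\mu)\big]\le\frac{C^p}{2}\Big(2(1-s)\mathbb{M}(\mu)+\frac{s}{\sqrt t}\sum_{x\in\mathcal{X}}\sqrt{\mu(x)}\Big).$$
   Context: $\mathcal{M}_+(\mathcal{X})$ is the set of non-negative measures on the finite set $\mathcal{X}$, $\mathbb{M}(\mu)=\sum_x\mu(x)$. For $\mu,\nu\in\mathcal{M}_+(\mathcal{X})$, $\Pi_\le(\mu,\nu)$ is the set of $\pi\in\mathcal{M}_+(\mathcal{X}\times\mathcal{X})$ with $\sum_{x'}\pi(x,x')\le\mu(x)$ and $\sum_x\pi(x,x')\le\nu(x')$ for all $x,x'$, and the $(p,C)$-Kantorovich–Rubinstein distance is $\mathrm{KR}_{p,C}(\mu,\nu)=\big(\min_{\pi\in\Pi_\le(\mu,\nu)}\sum_{x,x'}d^p(x,x')\pi(x,x')+C^p(\frac{\mathbb{M}(\mu)+\mathbb{M}(\nu)}{2}-\mathbb{M}(\pi))\big)^{1/p}$. Poisson model: let $(P_x)_{x\in\mathcal{X}}$ be independent with $P_x\sim\mathrm{Poi}(t\mu(x))$ and, independently, $(B_x)_{x\in\mathcal{X}}$ independent with $B_x\sim\mathrm{Ber}(s)$; the estimator is $\hat\mu_{t,s}=\frac{1}{st}\sum_{x\in\mathcal{X}}B_xP_x\delta_x$.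 *)

(* Defs.v *)
From HB Require Import structures.
From mathcomp Require Import all_boot all_order all_algebra.
From mathcomp Require Import all_classical all_reals all_analysis.
Set Implicit Arguments. Unset Strict Implicit. Unset Printing Implicit Defensive.
Import Order.TTheory GRing.Theory Num.Theory.
Local Open Scope ring_scope.
Local Open Scope classical_set_scope.

Section Defs.
Variables (R : realType) (X : finType).

Definition is_metric (d : X -> X -> R) : Prop :=
  [/\ forall x y, 0 <= d x y,
      forall x y, d x y = 0 <-> x = y,
      forall x y, d x y = d y x &
      forall x y z, d x z <= d x y + d y z].

Definition nonneg_measure (mu : X -> R) : Prop := forall x, 0 <= mu x.

Definition mass (mu : X -> R) : R := \sum_(x : X) mu x.

Definition subcoupling (mu nu : X -> R) (pi : {ffun X * X -> R}) : Prop :=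
  [/\ forall z, 0 <= pi z,
      forall x, \sum_(x' : X) pi (x, x') <= mu x &
      forall x', \sum_(x : X) pi (x, x') <= nu x'].

Definition KR_cost (d : X -> X -> R) (p C : R) (mu nu : X -> R)
    (pi : {ffun X * X -> R}) : R :=
  \sum_(z : X * X) (d z.1 z.2 `^ p) * pi z
  + C `^ p * ((mass mu + mass nu) / 2 - \sum_(z : X * X) pi z).

(* KR_{p,C}(mu,nu) = (min_{pi in Pi_<=} cost)^(1/p); the minimum is attained
   (continuous function on a nonempty compact polytope), so it equals the inf. *)
Definition KR (d : X -> X -> R) (p C : R) (mu nu : X -> R) : R :=
  (inf [set KR_cost d p C mu nu pi | pi in subcoupling mu nu]) `^ p^-1.

(* Outcomes of the Poisson model: omega x = (B_x, P_x). *)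
Definition outcome := {ffun X -> bool * nat}.

Definition bernoulli_pmf (s : R) (b : bool) : R := if b then s else 1 - s.
Definition poisson_pmf (lam : R) (n : nat) : R :=
  expR (- lam) * lam ^+ n / (n`!)%:R.

Definition poisson_model_prob (t s : R) (mu : X -> R) (om : outcome) : R :=
  \prod_(x : X) (bernoulli_pmf s (om x).1 * poisson_pmf (t * mu x) (om x).2).

Definition estimator (t s : R) (om : outcome) : X -> R :=
  fun x => ((om x).1%:R * (om x).2%:R) / (s * t).

Definition pm_expectation (t s : R) (mu : X -> R) (f : outcome -> R) : \bar R :=
  \esum_(om in [set: outcome]) (poisson_model_prob t s mu om * f om)%:E.

End Defs.

(* Main.v *)
Require Import Defs.
From HB Require Import structures.
From mathcomp Require Import all_boot all_order all_algebra.
From mathcomp Require Import all_classical all_reals all_analysis.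
From mathcomp Require Import ring lra zify.
Import Order.TTheory GRing.Theory Num.Theory.
Local Open Scope ring_scope.
Section Pois.
Variable R : realType.

Definition qq (l : R) (n : nat) : R := l ^+ n / (n`!)%:R.

Lemma qq_ge0 l n : 0 <= l -> 0 <= qq l n.
Proof. by move=> l0; rewrite /qq divr_ge0 ?exprn_ge0. Qed.

Lemma qqS l n : l * qq l n = n.+1%:R * qq l n.+1.
Proof.
rewrite /qq factS natrM exprS.
have h1 : (n`!)%:R != 0 :> R by rewrite pnatr_eq0 -lt0n fact_gt0.
have h2 : (n.+1)%:R != 0 :> R by rewrite pnatr_eq0.
by field; rewrite h1 /= addrC natr1.
Qed.

Lemma partial_exp l N : 0 <= l -> \sum_(n < N) qq l n <= expR l.
Proof.
move=> l0.
have -> : \sum_(n < N) qq l n = series (exp_coeff l) N.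
  by rewrite /series /= -(big_mkord xpredT (fun n => qq l n)).
apply: nondecreasing_cvgn_le; last exact: is_cvg_series_exp_coeff.
apply/nondecreasing_seqP => n; rewrite /series /= big_nat_recr //= lerDl.
by rewrite /exp_coeff /= divr_ge0 ?exprn_ge0.
Qed.


Lemma sum_mono (F : nat -> R) N K : (N <= K)%N -> (forall n, 0 <= F n) ->
  \sum_(n < N) F n <= \sum_(n < K) F n.
Proof.
move=> NK F0; rewrite -!(big_mkord xpredT) (@big_cat_nat _ _ _ N 0 K) // ?leq0n /=.
by rewrite lerDl sumr_ge0.
Qed.

Lemma sumU (l : R) N : \sum_(n < N.+1) n%:R * qq l n = l * \sum_(n < N) qq l n.
Proof.
elim: N => [|N IH]; first by rewrite big_ord_recr big_ord0 /= !mul0r big_ord0 mulr0 add0r.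
rewrite big_ord_recr /= IH [in RHS]big_ord_recr /= mulrDr qqS.
by [].
Qed.

Lemma sumT (l : R) M : \sum_(n < M.+1) qq l n * (n%:R - l) ^+ 2
  = l * \sum_(n < M.+1) qq l n - l * qq l M * (M.+1%:R - l).
Proof.
elim: M => [|M IH].
  rewrite !big_ord_recr !big_ord0 /= /qq /= expr0 divr1 !add0r; ring.
rewrite big_ord_recr /= IH [in RHS]big_ord_recr /= qqS.
rewrite -[M.+2]addn1 -[M.+1]addn1 !natrD; ring.
Qed.

Lemma pmfE (l : R) n : expR (- l) * l ^+ n / (n`!)%:R = expR (- l) * qq l n.
Proof. by rewrite /qq mulrA. Qed.

Lemma sum_pmf_le1 (l : R) N : 0 <= l ->
  \sum_(n < N) expR (- l) * l ^+ n / (n`!)%:R <= 1.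
Proof.
move=> l0; under eq_bigr do rewrite pmfE.
rewrite -mulr_sumr expRN ler_pdivrMl ?expR_gt0 // mulr1.
exact: partial_exp.
Qed.

Lemma sum_pmf_mean (l : R) N : 0 <= l ->
  \sum_(n < N) expR (- l) * l ^+ n / (n`!)%:R * n%:R <= l.
Proof.
move=> l0; under eq_bigr do rewrite pmfE -mulrA [qq _ _ * _]mulrC.
rewrite -mulr_sumr expRN ler_pdivrMl ?expR_gt0 //.
apply: (@le_trans _ _ (\sum_(n < N.+1) n%:R * qq l n)).
  rewrite big_ord_recr /= lerDl mulr_ge0 ?qq_ge0 //.
rewrite sumU [X in _ <= X]mulrC; apply: ler_wpM2l => //; exact: partial_exp.
Qed.

Lemma sum_pmf_var (l : R) N : 0 <= l ->
  \sum_(n < N) expR (- l) * l ^+ n / (n`!)%:R * (n%:R - l) ^+ 2 <= l.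
Proof.
move=> l0; under eq_bigr do rewrite pmfE -mulrA.
rewrite -mulr_sumr expRN ler_pdivrMl ?expR_gt0 //.
pose M := (N + Num.Def.archi_bound l)%N.
have NM : (N <= M.+1)%N by rewrite /M; lia.
have lM : l <= M.+1%:R.
  apply: (le_trans (ltW (archi_boundP l0))); rewrite ler_nat /M; lia.
apply: (@le_trans _ _ (\sum_(n < M.+1) qq l n * (n%:R - l) ^+ 2)).
  apply: (@sum_mono (fun n : nat => qq l n * (n%:R - l) ^+ 2) N M.+1 NM) => n.
  by rewrite mulr_ge0 ?qq_ge0 ?sqr_ge0.
rewrite sumT [X in _ <= X]mulrC.
apply: (@le_trans _ _ (l * \sum_(n < M.+1) qq l n)).
  rewrite lerBlDr lerDl mulr_ge0 ?subr_ge0 // mulr_ge0 ?qq_ge0 //.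
apply: ler_wpM2l => //; exact: partial_exp.
Qed.


Lemma sum_pmf_abs (l : R) N : 0 <= l ->
  \sum_(n < N) expR (- l) * l ^+ n / (n`!)%:R * `|n%:R - l| <= Num.sqrt l.
Proof.
move=> l0; have [->|lpos] := eqVneq l 0.
  rewrite sqrtr0 big1 // => -[[|n] _] /=; first by rewrite subr0 normr0 mulr0.
  by rewrite expr0n /= mulr0 mul0r mul0r.
have lp : 0 < l by rewrite lt_def lpos l0.
set c := Num.sqrt l.
have cp : 0 < c by rewrite sqrtr_gt0.
have cc : c * c = l by rewrite -expr2 sqr_sqrtr.
set p := fun n : nat => expR (- l) * l ^+ n / (n`!)%:R.
have p0 n : 0 <= p n by rewrite /p mulr_ge0 ?invr_ge0 ?mulr_ge0 ?expR_ge0 ?exprn_ge0.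
have key n : p n * `|n%:R - l| <= (p n * (n%:R - l) ^+ 2 + l * p n) / (2 * c).
  rewrite ler_pdivlMr ?mulr_gt0 //.
  have h : 2 * c * `|n%:R - l| <= (n%:R - l) ^+ 2 + l.
    have e1 := real_normK (num_real (n%:R - l)).
    have e2 := sqr_ge0 (`|n%:R - l| - c).
    move: e1 e2; set x := n%:R - l; rewrite sqrrB !expr2 => e1 e2.
    rewrite -e1 -cc; nra.
  have := ler_wpM2l (p0 n) h; nra.
apply: (le_trans (ler_sum _ (fun i _ => key (nat_of_ord i)))).
rewrite -mulr_suml big_split /= -mulr_sumr.
rewrite ler_pdivrMr; last by rewrite mulr_gt0.
have h1 : \sum_(i < N) p i * (i%:R - l) ^+ 2 <= l by exact: sum_pmf_var.
have h2 : \sum_(i < N) p i <= 1 by exact: sum_pmf_le1.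
nra.
Qed.


Lemma pointwise (s t m : R) (n : nat) : 0 < s -> s <= 1 -> 0 < t ->
  s * `|n%:R / (s * t) - m| <= ((1 - s) * n%:R + s * `|n%:R - t * m|) / t.
Proof.
move=> s0 s1 t0.
have -> : s * `|n%:R / (s * t) - m| = `|(1 - s) * n%:R + s * (n%:R - t * m)| / t.
  have e : s * (n%:R / (s * t) - m) = ((1 - s) * n%:R + s * (n%:R - t * m)) * t^-1.
    by field; rewrite ?gt_eqF.
  by rewrite -{1}(gtr0_norm s0) -normrM e normrM normfV (gtr0_norm t0).
rewrite ler_pM2r ?invr_gt0 //.
apply: (le_trans (ler_normD _ _)); rewrite normrM ger0_norm ?subr_ge0 //.
rewrite normrM (gtr0_norm s0) lerD2r ger0_norm // mulr_ge0 ?subr_ge0 //.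
Qed.


Lemma coord_bound (s t m : R) N : 0 < s -> s <= 1 -> 0 < t -> 0 <= m ->
  \sum_(a : bool * 'I_N) (Defs.bernoulli_pmf s a.1 * Defs.poisson_pmf (t * m) a.2)
     * `|a.1%:R * (nat_of_ord a.2)%:R / (s * t) - m|
  <= 2 * (1 - s) * m + s / Num.sqrt t * Num.sqrt m.
Proof.
move=> s0 s1 t0 m0.
have l0 : 0 <= t * m by rewrite mulr_ge0 // ltW.
set P := fun n : nat => Defs.poisson_pmf (t * m) n.
have P0 n : 0 <= P n.
  by rewrite /P /Defs.poisson_pmf mulr_ge0 ?invr_ge0 ?mulr_ge0 ?expR_ge0 ?exprn_ge0.
have F1 : \sum_(n < N) P n <= 1 by exact: sum_pmf_le1.
have F2 : \sum_(n < N) P n * n%:R <= t * m by exact: sum_pmf_mean.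
have F3 : \sum_(n < N) P n * `|n%:R - t * m| <= Num.sqrt (t * m) by exact: sum_pmf_abs.
rewrite -(pair_big xpredT xpredT (fun (b : bool) (n : 'I_N) =>
   (Defs.bernoulli_pmf s b * P n) * `|b%:R * n%:R / (s * t) - m|)) /=.
rewrite big_bool /= /Defs.bernoulli_pmf.
have Hf : \sum_(n < N) (1 - s) * P n * `|0%:R * n%:R / (s * t) - m| = (1 - s) * m * \sum_(n < N) P n.
  rewrite mulr_sumr; apply: eq_bigr => n _.
  by rewrite mul0r mul0r sub0r normrN ger0_norm //; ring.
have Ht : \sum_(n < N) s * P n * `|1%:R * n%:R / (s * t) - m|
    <= ((1 - s) * (t * m) + s * Num.sqrt (t * m)) / t.
  apply: (@le_trans _ _ (\sum_(n < N) ((1 - s) * (P n * n%:R) + s * (P n * `|n%:R - t * m|)) / t)).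
    apply: ler_sum => n _; rewrite mul1r -mulrA [s * _]mulrC -mulrA.
    have := ler_wpM2l (P0 n) (@pointwise s t m n s0 s1 t0).
    congr (_ <= _); rewrite mulrC; ring.
  rewrite -mulr_suml big_split /= -!mulr_sumr ler_pM2r ?invr_gt0 //.
  apply: lerD; apply: ler_wpM2l => //; rewrite ?subr_ge0 //; exact: ltW.
rewrite Hf.
have e : Num.sqrt (t * m) / t = Num.sqrt m / Num.sqrt t.
  have st : 0 < Num.sqrt t by rewrite sqrtr_gt0.
  rewrite sqrtrM ?ltW // -{2}(sqr_sqrtr (ltW t0)) expr2; field; rewrite gt_eqF //.
have Ht' : \sum_(n < N) s * P n * `|1%:R * n%:R / (s * t) - m|
    <= (1 - s) * m + s * (Num.sqrt m / Num.sqrt t).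
  apply: (le_trans Ht); rewrite mulrDl -e; apply: lerD; last by rewrite mulrA.
  by rewrite -mulrA mulrAC divff ?gt_eqF // mul1r.
rewrite [s / _ * _]mulrAC -[s * _ / _]mulrA.
have : (1 - s) * m * \sum_(n < N) P n <= (1 - s) * m by
  rewrite ler_piMr // mulr_ge0 // subr_ge0.
move: Ht'; lra.
Qed.

End Pois.
Section KRb.
Variables (R : realType) (X : finType).
Local Open Scope classical_set_scope.

Lemma sum_pair (pi : {ffun X * X -> R}) :
  \sum_(z : X * X) pi z = \sum_(x : X) \sum_(x' : X) pi (x, x').
Proof. by rewrite pair_big /=; apply: eq_bigr => -[a b]. Qed.

Lemma cost_ge0 (d : X -> X -> R) p C (nu mu : X -> R) pi :
  Defs.subcoupling nu mu pi -> 0 <= Defs.KR_cost d p C nu mu pi.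
Proof.
move=> [pi0 row col]; rewrite /Defs.KR_cost.
apply: addr_ge0; first by apply: sumr_ge0 => z _; rewrite mulr_ge0 ?powR_ge0.
apply: mulr_ge0; first exact: powR_ge0.
have h1 : \sum_(z : X * X) pi z <= Defs.mass nu.
  by rewrite sum_pair /Defs.mass; apply: ler_sum => x _; exact: row.
have h2 : \sum_(z : X * X) pi z <= Defs.mass mu.
  by rewrite sum_pair exchange_big /Defs.mass; apply: ler_sum => x _; exact: col.
lra.
Qed.

Lemma KR_bound (d : X -> X -> R) p C (nu mu : X -> R) :
  Defs.is_metric d -> (forall x, 0 <= nu x) -> (forall x, 0 <= mu x) ->
  1 <= p -> 0 < C ->
  Defs.KR d p C nu mu `^ p <= C `^ p / 2 * \sum_(x : X) `|nu x - mu x|.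
Proof.
move=> [d0 dE _ _] nu0 mu0 p1 C0.
set S := [set Defs.KR_cost d p C nu mu pi | pi in Defs.subcoupling nu mu].
have Sge0 : lbound S 0 by move=> y [pi hpi <-]; exact: cost_ge0.
pose pd : {ffun X * X -> R} := [ffun z => if z.1 == z.2 then Order.min (nu z.1) (mu z.1) else 0].
have pdS : Defs.subcoupling nu mu pd.
  split.
  - move=> z; rewrite ffunE; case: ifP => // _; rewrite le_min nu0 mu0 //.
  - move=> x; rewrite (bigD1 x) //= big1 ?addr0.
      by rewrite ffunE /= eqxx ge_min lexx.
    by move=> y yx; rewrite ffunE /= eq_sym (negbTE yx).
  - move=> x; rewrite (bigD1 x) //= big1 ?addr0.
      by rewrite ffunE /= eqxx ge_min lexx orbT.
    by move=> y yx; rewrite ffunE /= (negbTE yx).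
have p0 : p != 0 by apply/negP => /eqP p0; move: p1; rewrite p0 ler10.
have -> : Defs.KR d p C nu mu `^ p = inf S.
  rewrite /Defs.KR -powRrM mulVf // powRr1 //.
  apply: lb_le_inf => //; exists (Defs.KR_cost d p C nu mu pd); exists pd => //.
have := ge_inf (ex_intro _ 0 Sge0) (ex_intro2 _ _ pd pdS erefl).
move/le_trans; apply.
rewrite /Defs.KR_cost big1 ?add0r; last first.
  move=> z _; rewrite ffunE; case: eqP => [e|_]; last by rewrite mulr0.
  by rewrite e (proj2 (dE _ _) erefl) powR0 // mul0r.
rewrite -mulrA; apply: ler_wpM2l; first exact: powR_ge0.
rewrite sum_pair /Defs.mass.
have -> : \sum_x \sum_x' pd (x, x') = \sum_x Order.min (nu x) (mu x).
  apply: eq_bigr => x _; rewrite (bigD1 x) //= big1 ?addr0.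
    by rewrite ffunE /= eqxx.
  by move=> y yx; rewrite ffunE /= eq_sym (negbTE yx).
rewrite -big_split /=.
rewrite (_ : _ / 2 - _ = \sum_x ((nu x + mu x) / 2 - Order.min (nu x) (mu x))); last by rewrite sumrB mulr_suml.
rewrite mulr_sumr.
apply: ler_sum => x _.
have [h|h] := leP (nu x) (mu x).
  rewrite ler0_norm ?subr_le0 //; lra.
rewrite gtr0_norm ?subr_gt0 //; lra.
Qed.

End KRb.
Section Box.
Variables (R : realType) (X : finType).
Local Open Scope classical_set_scope.

Definition embed N (c : {ffun X -> bool * 'I_N}) : Defs.outcome X :=
  [ffun x => ((c x).1, nat_of_ord (c x).2)].
Arguments embed {N}.

Lemma box_bound (g : Defs.outcome X -> R) (B : R) :
  (forall om, 0 <= g om) ->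
  (forall N, \sum_(c : {ffun X -> bool * 'I_N.+1}) g (embed c) <= B) ->
  (\esum_(om in [set: Defs.outcome X]) (g om)%:E <= B%:E)%E.
Proof.
move=> g0 HB; apply/ereal_supP => y [A [finA _] <-].
rewrite fsbig_finite //= sumEFin lee_fin.
set r := finmap.enum_fset _.
have ur : uniq r by exact: finmap.fset_uniq.
pose N := \max_(om <- r) \max_(x : X) (om x).2.
have bnd om x : om \in r -> ((om x).2 <= N)%N.
  move=> omr; apply: (leq_trans _ (@leq_bigmax_seq _ r xpredT (fun om => \max_(x : X) (om x).2) om omr isT)).
  exact: (@leq_bigmax X (fun x => (om x).2) x).
pose tr (om : Defs.outcome X) : {ffun X -> bool * 'I_N.+1} :=
  [ffun x => ((om x).1, inord (om x).2)].
have ET om : om \in r -> embed (tr om) = om.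
  move=> omr; apply/ffunP => x; rewrite !ffunE /= inordK ?ltnS ?bnd //.
  by case: (om x).
rewrite (eq_big_seq (fun om => g (embed (tr om)))); last by move=> om omr; rewrite ET.
rewrite -(big_map tr xpredT (fun c => g (embed c))) big_uniq; last first.
  rewrite map_inj_in_uniq // => a b ar br e.
  by rewrite -(ET a ar) -(ET b br) e.
apply: le_trans (HB N).
rewrite [X in _ <= X](bigID (mem (map tr r))) /= lerDl.
by apply: sumr_ge0 => c _.
Qed.

End Box.
Arguments embed {X N}.
Theorem lemma2p4 (R : realType) (X : finType) (d : X -> X -> R)
  (mu : X -> R) (t s p C : R) :
  is_metric d -> nonneg_measure mu ->
  0 < t -> 0 < s -> s <= 1 -> 1 <= p -> 0 < C ->
  (pm_expectation t s mu (fun om => (KR d p C (estimator t s om) mu `^ p)%R)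
   <= ((C `^ p / 2) * (2 * (1 - s) * mass mu
        + s / Num.sqrt t * \sum_(x : X) Num.sqrt (mu x)))%:E)%E.
Proof.
move=> met mu0 t0 s0 s1 p1 C0.
have ber0 b : 0 <= Defs.bernoulli_pmf s b.
  case: b; rewrite /Defs.bernoulli_pmf ?subr_ge0 //; exact: ltW.
have poi0 (l : R) n : 0 <= l -> 0 <= Defs.poisson_pmf l n.
  by move=> l0; rewrite /Defs.poisson_pmf mulr_ge0 ?invr_ge0 ?mulr_ge0 ?expR_ge0 ?exprn_ge0.
have tm0 x : 0 <= t * mu x by apply: mulr_ge0; [exact: ltW | exact: mu0].
have prob0 om : 0 <= Defs.poisson_model_prob t s mu om.
  by apply: prodr_ge0 => x _; rewrite mulr_ge0 ?poi0.
have est0 om x : 0 <= Defs.estimator t s om x.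
  by rewrite /Defs.estimator divr_ge0 ?mulr_ge0 // ?ltW.
have Cp0 : 0 <= C `^ p / 2 by rewrite divr_ge0 ?powR_ge0.
pose Phi om := C `^ p / 2 * \sum_x `|Defs.estimator t s om x - mu x|.
rewrite /Defs.pm_expectation.
apply: (le_trans (le_esum (b := fun om => (Defs.poisson_model_prob t s mu om * Phi om)%:E) _)).
  move=> om _; rewrite lee_fin ler_wpM2l //; apply: KR_bound => //.
apply: box_bound => [om|N]; first by rewrite mulr_ge0 // mulr_ge0 ?sumr_ge0.
pose G x (a : bool * 'I_N.+1) := Defs.bernoulli_pmf s a.1 * Defs.poisson_pmf (t * mu x) a.2.
pose H y (a : bool * 'I_N.+1) : R := `|a.1%:R * (nat_of_ord a.2)%:R / (s * t) - mu y|.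
pose F y x a := G x a * (if x == y then H y a else 1).
have E1 (c : {ffun X -> bool * 'I_N.+1}) : Defs.poisson_model_prob t s mu (embed c) * Phi (embed c)
    = C `^ p / 2 * \sum_y \prod_x F y x (c x).
  rewrite /Phi mulrCA; congr (_ * _); rewrite mulr_sumr; apply: eq_bigr => y _.
  have P1 : \prod_x (if x == y then H y (c x) else 1) = H y (c y).
    rewrite (bigD1 y) //= eqxx big1 ?mulr1 // => x /negbTE -> //.
  rewrite /F big_split /= P1.
  congr (_ * _).
    by rewrite /Defs.poisson_model_prob; apply: eq_bigr => x _; rewrite /G ffunE.
  by rewrite /H /Defs.estimator ffunE.
rewrite (eq_bigr _ (fun c _ => E1 c)) -mulr_sumr exchange_big /=.
apply: ler_wpM2l => //.
have sumG x : 0 <= \sum_a G x a <= 1.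
  apply/andP; split; first by apply: sumr_ge0 => a _; rewrite /G mulr_ge0 ?poi0.
  rewrite /G -(pair_big xpredT xpredT (fun (b : bool) (n : 'I_N.+1) =>
     Defs.bernoulli_pmf s b * Defs.poisson_pmf (t * mu x) n)) /=.
  rewrite big_bool /= -!mulr_sumr /Defs.bernoulli_pmf.
  have h : \sum_(n < N.+1) Defs.poisson_pmf (t * mu x) n <= 1.
    rewrite /Defs.poisson_pmf; exact: sum_pmf_le1.
  have h0 : 0 <= \sum_(n < N.+1) Defs.poisson_pmf (t * mu x) n.
    by apply: sumr_ge0 => n _; rewrite poi0.
  nra.
rewrite /Defs.mass mulr_sumr mulr_sumr -big_split /=; apply: ler_sum => y _.
rewrite -(bigA_distr_bigA (F y)) /= (bigD1 y) //=.
have Hy : \sum_a F y y a = \sum_a G y a * H y a.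
  by apply: eq_bigr => a _; rewrite /F eqxx.
have Ho : \prod_(x | x != y) \sum_a F y x a <= 1.
  apply: prodr_ile1 => x xy.
  have -> : \sum_a F y x a = \sum_a G x a.
    by apply: eq_bigr => a _; rewrite /F (negbTE xy) mulr1.
  exact: sumG.
have Hp : 0 <= \sum_a G y a * H y a.
  by apply: sumr_ge0 => a _; apply: mulr_ge0; [rewrite /G mulr_ge0 ?poi0 | exact: normr_ge0].
rewrite Hy; apply: (le_trans (ler_piMr Hp Ho)).
have := @coord_bound R s t (mu y) N.+1 s0 s1 t0 (mu0 y).
exact.
Qed.
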